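(* Under the hypotheses: $N\ge M$, $d_i>0$ for all $i$, $\mathbf{P}\in\mathbb{Z}_{\ge0}^N$ with $P_N>0$, $\mathbf{L}\in\mathbb{R}^{N\times M}$ full rank with non-negative entries and $L_{N,j}>0$ for all $j$, let $l$ be the Poisson log-likelihood and $\mathbf{T}$ the multiplicative map defined in the context. Then: (i) a point $\tilde{\boldsymbol\alpha}\ge 0$ is the (unique) maximizer of $l$ on the non-negative orthant if and only if it satisfies the KKT conditions $\tilde\alpha_j\,\partial_j l(\tilde{\boldsymbol\alpha})=0$ for all $j$ and $\partial_j l(\tilde{\boldsymbol\alpha})\le 0$ whenever $\tilde\alpha_j=0$; in particular the maximizer is a fixed point of $\mathbf{T}$; (ii) if $\boldsymbol\alpha$ has all components strictly positive, then $\mathbf{T}(\boldsymbol\alpha)$ has all components strictly positive; hence if $\boldsymbol\alpha^{(0)}>0$ componentwise, all iterates $\boldsymbol\alpha^{(n+1)}=\mathbf{T}(\boldsymbol\alpha^{(n)})$ are strictly positive; (iii) a strictly positive $\boldsymbol\alpha$ is a fixed point of $\mathbf{T}$ only if it is the maximizer of $l$ on the non-negative orthant.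
   Context: $l(\boldsymbol\alpha)=\sum_{i=1}^N\big(P_i\log d_i-(\mathbf{L}\boldsymbol\alpha)_iP_i-d_i e^{-(\mathbf{L}\boldsymbol\alpha)_i}-\log(P_i!)\big)$ for $\boldsymbol\alpha\ge0$, with gradient $\partial_j l(\boldsymbol\alpha)=\sum_i L_{i,j}\big(d_ie^{-(\mathbf{L}\boldsymbol\alpha)_i}-P_i\big)$. The map $\mathbf{T}:\mathbb{R}^M\to\mathbb{R}^M$ is $$\mathbf{T}(\boldsymbol\alpha)_j=\frac{\big(\mathbf{L}^T(\mathbf{d}\odot e^{-\mathbf{L}\boldsymbol\alpha})\big)_j}{(\mathbf{L}^T\mathbf{P})_j}\,\alpha_j,$$ where $\odot$ is the componentwise product and $e^{-\mathbf{L}\boldsymbol\alpha}$ is taken componentwise; the denominators are positive under the hypotheses. *)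

(* Defs.v *)
From Stdlib Require Import Reals Lra Lia Arith Factorial.
Open Scope R_scope.

(* Vectors are functions nat -> R; indices are 0-based:
   i ranges over 0..N-1, j over 0..M-1.  Matrix L : nat -> nat -> R, L i j. *)

Fixpoint sumR (n : nat) (f : nat -> R) : R :=
  match n with
  | O => 0
  | S k => sumR k f + f k
  end.

Definition Lmul (M : nat) (L : nat -> nat -> R) (alpha : nat -> R) (i : nat) : R :=
  sumR M (fun j => L i j * alpha j).

Definition loglik (N M : nat) (L : nat -> nat -> R) (d : nat -> R) (P : nat -> nat)
  (alpha : nat -> R) : R :=
  sumR N (fun i => INR (P i) * ln (d i) - Lmul M L alpha i * INR (P i)
                   - d i * exp (- Lmul M L alpha i) - ln (INR (fact (P i)))).

Definition grad (N M : nat) (L : nat -> nat -> R) (d : nat -> R) (P : nat -> nat)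
  (alpha : nat -> R) (j : nat) : R :=
  sumR N (fun i => L i j * (d i * exp (- Lmul M L alpha i) - INR (P i))).

Definition Tmap (N M : nat) (L : nat -> nat -> R) (d : nat -> R) (P : nat -> nat)
  (alpha : nat -> R) (j : nat) : R :=
  sumR N (fun i => L i j * (d i * exp (- Lmul M L alpha i)))
  / sumR N (fun i => L i j * INR (P i)) * alpha j.

Fixpoint Titer (N M : nat) (L : nat -> nat -> R) (d : nat -> R) (P : nat -> nat)
  (a0 : nat -> R) (n : nat) : nat -> R :=
  match n with
  | O => a0
  | S k => Tmap N M L d P (Titer N M L d P a0 k)
  end.

Definition full_col_rank (N M : nat) (L : nat -> nat -> R) : Prop :=
  forall x : nat -> R,
    (forall i, (i < N)%nat -> Lmul M L x i = 0) ->
    forall j, (j < M)%nat -> x j = 0.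

Definition nonneg_vec (M : nat) (alpha : nat -> R) : Prop :=
  forall j, (j < M)%nat -> 0 <= alpha j.

Definition pos_vec (M : nat) (alpha : nat -> R) : Prop :=
  forall j, (j < M)%nat -> 0 < alpha j.

Definition is_maximizer (N M : nat) (L : nat -> nat -> R) (d : nat -> R) (P : nat -> nat)
  (alpha : nat -> R) : Prop :=
  nonneg_vec M alpha /\
  forall beta, nonneg_vec M beta -> loglik N M L d P beta <= loglik N M L d P alpha.

Definition KKT (N M : nat) (L : nat -> nat -> R) (d : nat -> R) (P : nat -> nat)
  (alpha : nat -> R) : Prop :=
  forall j, (j < M)%nat ->
    alpha j * grad N M L d P alpha j = 0 /\
    (alpha j = 0 -> grad N M L d P alpha j <= 0).

Definition is_fixed_point (N M : nat) (L : nat -> nat -> R) (d : nat -> R) (P : nat -> nat)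
  (alpha : nat -> R) : Prop :=
  forall j, (j < M)%nat -> Tmap N M L d P alpha j = alpha j.

(* Main.v *)
Require Import Defs.
From Stdlib Require Import Reals Lra Lia Arith Factorial.
From Coquelicot Require Import Coquelicot.
Open Scope R_scope.

Lemma sumR_ext n f g : (forall k, (k < n)%nat -> f k = g k) -> sumR n f = sumR n g.
Proof. induction n; simpl; intros H; auto. rewrite IHn; [rewrite H|]; auto; intros; apply H; lia. Qed.

Lemma sumR_le n f g : (forall k, (k < n)%nat -> f k <= g k) -> sumR n f <= sumR n g.
Proof. induction n; simpl; intros H; [lra|]. assert (sumR n f <= sumR n g) by (apply IHn; intros; apply H; lia). specialize (H n ltac:(lia)). lra. Qed.

Lemma sumR_lt n f g k0 : (forall k, (k < n)%nat -> f k <= g k) -> (k0 < n)%nat -> f k0 < g k0 -> sumR n f < sumR n g.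
Proof. induction n; simpl; intros H Hk Hs; [lia|].
  destruct (Nat.eq_dec k0 n) as [->|Hne].
  - assert (sumR n f <= sumR n g) by (apply sumR_le; intros; apply H; lia). lra.
  - assert (sumR n f < sumR n g) by (apply IHn; [intros; apply H; lia| lia | auto]).
    specialize (H n ltac:(lia)). lra. Qed.

Lemma sumR_plus n f g : sumR n (fun k => f k + g k) = sumR n f + sumR n g.
Proof. induction n; simpl; [lra|]. rewrite IHn; lra. Qed.

Lemma sumR_minus n f g : sumR n (fun k => f k - g k) = sumR n f - sumR n g.
Proof. induction n; simpl; [lra|]. rewrite IHn; lra. Qed.

Lemma sumR_scal n c f : sumR n (fun k => c * f k) = c * sumR n f.
Proof. induction n; simpl; [lra|]. rewrite IHn; lra. Qed.

Lemma sumR_scal_r n c f : sumR n (fun k => f k * c) = sumR n f * c.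
Proof. induction n; simpl; [lra|]. rewrite IHn; lra. Qed.

Lemma sumR_zero n : sumR n (fun _ => 0) = 0.
Proof. induction n; simpl; [lra|]. rewrite IHn; lra. Qed.

Lemma sumR_swap n m f : sumR n (fun i => sumR m (fun j => f i j)) = sumR m (fun j => sumR n (fun i => f i j)).
Proof. induction n; simpl. - now rewrite sumR_zero. - rewrite IHn, <- sumR_plus. reflexivity. Qed.

Lemma sumR_delta m (g : nat -> R) j : (j < m)%nat ->
  sumR m (fun k => g k * (if Nat.eq_dec k j then 1 else 0)) = g j.
Proof. induction m; simpl; intros H; [lia|].
  destruct (Nat.eq_dec m j) as [->|Hne].
  - rewrite (sumR_ext _ _ (fun _ => 0)). rewrite sumR_zero; lra.
    intros k Hk. destruct (Nat.eq_dec k j); [lia|lra].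
  - rewrite IHm by lia. lra. Qed.

Lemma sumR_pos n f k0 : (forall k, (k < n)%nat -> 0 <= f k) -> (k0 < n)%nat -> 0 < f k0 -> 0 < sumR n f.
Proof. intros. rewrite <- (sumR_zero n). apply (sumR_lt _ _ _ k0); auto. Qed.

Lemma Lmul_minus M L a b i : Lmul M L b i - Lmul M L a i = Lmul M L (fun j => b j - a j) i.
Proof. unfold Lmul. rewrite <- sumR_minus. apply sumR_ext; intros; ring. Qed.

Lemma term_le d p u v c : 0 < d ->
  (p*ln d - v*p - d*exp(-v) - c) - (p*ln d - u*p - d*exp(-u) - c) <= (v-u)*(d*exp(-u) - p).
Proof. intros Hd. replace (-v) with (-u + (u - v)) by ring. rewrite exp_plus.
  pose proof (exp_ineq1_le (u-v)). pose proof (exp_pos (-u)).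
  assert (0 < d * exp (-u)) by (apply Rmult_lt_0_compat; auto).
  assert (0 <= d*exp(-u) * (exp (u-v) - (1 + (u-v)))) by (apply Rmult_le_pos; lra).
  nra. Qed.

Lemma term_lt d p u v c : 0 < d -> u <> v ->
  (p*ln d - v*p - d*exp(-v) - c) - (p*ln d - u*p - d*exp(-u) - c) < (v-u)*(d*exp(-u) - p).
Proof. intros Hd Huv. replace (-v) with (-u + (u - v)) by ring. rewrite exp_plus.
  pose proof (exp_ineq1 (u-v) ltac:(lra)). pose proof (exp_pos (-u)).
  assert (0 < d * exp (-u)) by (apply Rmult_lt_0_compat; auto).
  assert (0 < d*exp(-u) * (exp (u-v) - (1 + (u-v)))) by (apply Rmult_lt_0_compat; lra).
  nra. Qed.

Section S.
Variables (N M : nat) (L : nat -> nat -> R) (d : nat -> R) (P : nat -> nat).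
Hypothesis hd : forall i, (i < N)%nat -> 0 < d i.

Lemma lin_rhs a b :
  sumR N (fun i => (Lmul M L b i - Lmul M L a i) * (d i * exp (- Lmul M L a i) - INR (P i)))
  = sumR M (fun j => grad N M L d P a j * (b j - a j)).
Proof.
  rewrite (sumR_ext _ _ (fun i => sumR M (fun j => L i j * (b j - a j) * (d i * exp (- Lmul M L a i) - INR (P i))))).
  2:{ intros i _. rewrite Lmul_minus. unfold Lmul. rewrite <- sumR_scal_r. reflexivity. }
  rewrite sumR_swap. apply sumR_ext. intros j _. unfold grad. rewrite <- sumR_scal_r.
  apply sumR_ext; intros; ring. Qed.

Lemma lin_le a b : loglik N M L d P b - loglik N M L d P a <= sumR M (fun j => grad N M L d P a j * (b j - a j)).
Proof. rewrite <- lin_rhs. unfold loglik. rewrite <- sumR_minus. apply sumR_le. intros i Hi.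
  apply term_le; auto. Qed.

Lemma lin_lt a b i0 : (i0 < N)%nat -> Lmul M L b i0 <> Lmul M L a i0 ->
  loglik N M L d P b - loglik N M L d P a < sumR M (fun j => grad N M L d P a j * (b j - a j)).
Proof. intros Hi0 Hne. rewrite <- lin_rhs. unfold loglik. rewrite <- sumR_minus. apply (sumR_lt _ _ _ i0); auto.
  intros i Hi. apply term_le; auto. apply term_lt; auto. Qed.

Lemma KKT_max a : nonneg_vec M a -> KKT N M L d P a -> is_maximizer N M L d P a.
Proof. intros Hn HK. split; auto. intros b Hb. pose proof (lin_le a b).
  assert (sumR M (fun j => grad N M L d P a j * (b j - a j)) <= 0).
  { rewrite <- (sumR_zero M). apply sumR_le. intros j Hj. destruct (HK j Hj) as [H1 H2].
    specialize (Hb j Hj). destruct (Req_dec (a j) 0) as [E|E].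
    - specialize (H2 E). rewrite E. nra.
    - assert (Hg: grad N M L d P a j = 0) by (apply Rmult_integral in H1; tauto). rewrite Hg. lra. }
  lra. Qed.

Definition upd (a : nat -> R) j t k := a k + t * (if Nat.eq_dec k j then 1 else 0).

Definition G a j t := sumR N (fun i => INR (P i) * ln (d i) - (Lmul M L a i + t * L i j) * INR (P i)
                   - d i * exp (- (Lmul M L a i + t * L i j)) - ln (INR (fact (P i)))).

Lemma G_upd a j t : (j < M)%nat -> loglik N M L d P (upd a j t) = G a j t.
Proof. intros Hj. unfold loglik, G. apply sumR_ext. intros i _.
  assert (Lmul M L (upd a j t) i = Lmul M L a i + t * L i j) as ->; [|reflexivity].
  unfold Lmul, upd. rewrite (sumR_ext _ _ (fun k => L i k * a k + t * (L i k * (if Nat.eq_dec k j then 1 else 0)))).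
  2:{ intros; ring. } rewrite sumR_plus, sumR_scal, sumR_delta; auto. Qed.

Lemma G0 a j : G a j 0 = loglik N M L d P a.
Proof. unfold G, loglik. apply sumR_ext. intros. f_equal; f_equal; f_equal; f_equal; f_equal; ring. Qed.

Lemma is_derive_sumR n (f : nat -> R -> R) df x :
  (forall k, derivable_pt_lim (f k) x (df k)) -> derivable_pt_lim (fun t => sumR n (fun k => f k t)) x (sumR n df).
Proof. intros H. induction n; simpl.
  - apply derivable_pt_lim_const.
  - apply (derivable_pt_lim_plus (fun t => sumR n (fun k => f k t)) (f n)); auto. Qed.

Lemma G_deriv a j : derivable_pt_lim (G a j) 0 (grad N M L d P a j).
Proof. unfold G, grad. apply is_derive_sumR. intros i. apply is_derive_Reals.
  auto_derive; auto. rewrite Rmult_0_l, Rplus_0_r. ring. Qed.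

Lemma deriv_le (g : R -> R) l r : derivable_pt_lim g 0 l -> 0 < r ->
  (forall h, 0 < h < r -> g h <= g 0) -> l <= 0.
Proof. intros Hd Hr Hm. destruct (Rle_dec l 0) as [|Hl]; auto. exfalso.
  destruct (Hd l ltac:(lra)) as [[del Hdel] Hh]. simpl in Hh.
  set (h := Rmin del r / 2).
  assert (0 < h) by (unfold h; assert (0 < Rmin del r) by (apply Rmin_glb_lt; lra); lra).
  assert (h < del /\ h < r) by (unfold h; pose proof (Rmin_l del r); pose proof (Rmin_r del r); lra).
  specialize (Hh h ltac:(lra) ltac:(rewrite Rabs_pos_eq; lra)). rewrite Rplus_0_l in Hh.
  specialize (Hm h ltac:(lra)). apply Rabs_def2 in Hh. destruct Hh as [_ Hh].
  assert ((g h - g 0) / h <= 0). { unfold Rdiv. assert (0 < /h) by (apply Rinv_0_lt_compat; lra). nra. }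
  lra. Qed.

Lemma deriv_ge (g : R -> R) l r : derivable_pt_lim g 0 l -> 0 < r ->
  (forall h, -r < h < 0 -> g h <= g 0) -> 0 <= l.
Proof. intros Hd Hr Hm. destruct (Rle_dec 0 l) as [|Hl]; auto. exfalso.
  destruct (Hd (-l) ltac:(lra)) as [[del Hdel] Hh]. simpl in Hh.
  set (h := - (Rmin del r / 2)).
  assert (h < 0) by (unfold h; assert (0 < Rmin del r) by (apply Rmin_glb_lt; lra); lra).
  assert (-h < del /\ -h < r) by (unfold h; pose proof (Rmin_l del r); pose proof (Rmin_r del r); lra).
  specialize (Hh h ltac:(lra) ltac:(rewrite Rabs_left; lra)). rewrite Rplus_0_l in Hh.
  specialize (Hm h ltac:(lra)). apply Rabs_def2 in Hh. destruct Hh as [Hh _].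
  assert (0 <= (g h - g 0) / h). { unfold Rdiv. assert (/h < 0) by (apply Rinv_lt_0_compat; lra). nra. }
  lra. Qed.

Lemma upd_nonneg a j h : nonneg_vec M a -> 0 <= a j + h -> nonneg_vec M (upd a j h).
Proof. intros Ha Hh k Hk. unfold upd. destruct (Nat.eq_dec k j) as [->|]; [lra|]. specialize (Ha k Hk). lra. Qed.

Lemma max_KKT a : is_maximizer N M L d P a -> KKT N M L d P a.
Proof. intros [Hn Hm] j Hj.
  assert (HG : forall h, 0 <= a j + h -> G a j h <= G a j 0).
  { intros h Hh. rewrite G0, <- G_upd by auto. apply Hm, upd_nonneg; auto. }
  assert (Hle : grad N M L d P a j <= 0).
  { apply (deriv_le (G a j) _ 1); [apply G_deriv|lra|]. intros h Hh. apply HG. specialize (Hn j Hj). lra. }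
  split; auto.
  destruct (Req_dec (a j) 0) as [E|E]; [rewrite E; ring|].
  assert (0 < a j) by (specialize (Hn j Hj); lra).
  assert (0 <= grad N M L d P a j).
  { apply (deriv_ge (G a j) _ (a j)); [apply G_deriv|lra|]. intros h Hh. apply HG. lra. }
  replace (grad N M L d P a j) with 0 by lra. ring. Qed.

End S.

Theorem mainTheorem2
  (N M : nat) (L : nat -> nat -> R) (d : nat -> R) (P : nat -> nat)
  (hN : (0 < N)%nat) (hNM : (M <= N)%nat)
  (hd : forall i, (i < N)%nat -> 0 < d i)
  (hPN : (0 < P (N - 1))%nat)
  (hLnn : forall i j, (i < N)%nat -> (j < M)%nat -> 0 <= L i j)
  (hLN : forall j, (j < M)%nat -> 0 < L (N - 1)%nat j)
  (hrank : full_col_rank N M L) :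
  (* (i) *)
  (forall a, nonneg_vec M a ->
     (is_maximizer N M L d P a <-> KKT N M L d P a)) /\
  (forall a b, is_maximizer N M L d P a -> is_maximizer N M L d P b ->
     forall j, (j < M)%nat -> a j = b j) /\
  (forall a, is_maximizer N M L d P a -> is_fixed_point N M L d P a) /\
  (* (ii) *)
  (forall a, pos_vec M a -> pos_vec M (Tmap N M L d P a)) /\
  (forall a0, pos_vec M a0 -> forall n, pos_vec M (Titer N M L d P a0 n)) /\
  (* (iii) *)
  (forall a, pos_vec M a -> is_fixed_point N M L d P a -> is_maximizer N M L d P a).
Proof.
  set (den j := sumR N (fun i => L i j * INR (P i))).
  set (num a j := sumR N (fun i => L i j * (d i * exp (- Lmul M L a i)))).
  assert (Hden : forall j, (j < M)%nat -> 0 < den j).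
  { intros j Hj. apply (sumR_pos _ _ (N-1)); [|lia|].
    - intros i Hi. apply Rmult_le_pos; auto. apply pos_INR.
    - apply Rmult_lt_0_compat; auto. apply lt_0_INR; lia. }
  assert (Hnum : forall a j, (j < M)%nat -> 0 < num a j).
  { intros a j Hj. apply (sumR_pos _ _ (N-1)); [|lia|].
    - intros i Hi. apply Rmult_le_pos; auto. apply Rmult_le_pos; [apply Rlt_le, hd; auto|apply Rlt_le, exp_pos].
    - apply Rmult_lt_0_compat; auto. apply Rmult_lt_0_compat; [apply hd; lia|apply exp_pos]. }
  assert (Hgrad : forall a j, grad N M L d P a j = num a j - den j).
  { intros a j. unfold grad, num, den. rewrite <- sumR_minus. apply sumR_ext; intros; ring. }
  assert (HT : forall a j, Tmap N M L d P a j = num a j / den j * a j) by reflexivity.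
  assert (Hfix : forall a, KKT N M L d P a -> is_fixed_point N M L d P a).
  { intros a HK j Hj. destruct (HK j Hj) as [H1 _]. rewrite HT. rewrite Hgrad in H1.
    pose proof (Hden j Hj). field_simplify; [|lra]. apply Rmult_eq_reg_r with (den j); [|lra].
    unfold Rdiv. rewrite Rmult_assoc, Rinv_l by lra. nra. }
  assert (Hpos : forall a, pos_vec M a -> pos_vec M (Tmap N M L d P a)).
  { intros a Ha j Hj. rewrite HT. apply Rmult_lt_0_compat; auto.
    unfold Rdiv. apply Rmult_lt_0_compat; auto. apply Rinv_0_lt_compat; auto. }
  split; [|split; [|split; [|split; [|split]]]].
  - intros a Ha. split; [apply max_KKT; auto|apply KKT_max; auto].
  - intros a b Ha Hb j Hj. pose proof (max_KKT N M L d P a Ha) as HK.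
    assert (Hs : sumR M (fun j => grad N M L d P a j * (b j - a j)) <= 0).
    { rewrite <- (sumR_zero M). apply sumR_le. intros k Hk. destruct (HK k Hk) as [H1 H2].
      destruct Hb as [Hbn _]. specialize (Hbn k Hk). destruct (Req_dec (a k) 0) as [E|E].
      - specialize (H2 E). rewrite E. nra.
      - assert (Hg: grad N M L d P a k = 0) by (apply Rmult_integral in H1; tauto). rewrite Hg. lra. }
    assert (Heq : loglik N M L d P a = loglik N M L d P b).
    { destruct Ha as [Han Ha]; destruct Hb as [Hbn Hb]. specialize (Ha b Hbn). specialize (Hb a Han). lra. }
    assert (forall i, (i < N)%nat -> Lmul M L (fun k => b k - a k) i = 0).
    { intros i Hi. rewrite <- Lmul_minus. destruct (Req_dec (Lmul M L b i) (Lmul M L a i)) as [E|E]; [lra|].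
      exfalso. pose proof (lin_lt N M L d P hd a b i Hi E). lra. }
    pose proof (hrank _ H j Hj). simpl in H0. lra.
  - intros a Ha. apply Hfix, max_KKT; auto.
  - exact Hpos.
  - intros a0 H0 n. induction n; simpl; auto.
  - intros a Ha Hf. apply KKT_max; auto. { intros j Hj; apply Rlt_le; auto. }
    intros j Hj. assert (Hg : grad N M L d P a j = 0).
    { specialize (Hf j Hj). rewrite HT in Hf. rewrite Hgrad. specialize (Ha j Hj). pose proof (Hden j Hj).
      assert (num a j / den j = 1).
      { apply Rmult_eq_reg_r with (a j); lra. }
      unfold Rdiv in H0. apply Rmult_eq_reg_r with (/ den j). 2:{ apply Rinv_neq_0_compat; lra. }
      rewrite Rmult_minus_distr_r, Rinv_r by lra. lra. }
    rewrite Hg. split; [ring|lra].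
Qed.
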